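(* Let $h$ be a non-degenerate symmetric $(0,2)$-tensor field and $J_1,J_2$ $h$-symmetric $(1,1)$-tensor fields on a smooth manifold $M$ such that $J_i^2=-(\lambda_i+1)I$ for real numbers $\lambda_1,\lambda_2$, and $J_1J_2+J_2J_1=-(\lambda_1+\lambda_2)I$. Define $\hat J_i(X+\eta)=J_iX+\lambda_ih^{-1}(\eta)+h(X)-J_i^*\eta$, $i=1,2$, on $TM\oplus T^*M$. Then $(\hat J_1,\hat J_2,\hat J_1\hat J_2)$ is a generalized almost quaternionic structure on $M$, i.e. $\hat J_1^2=\hat J_2^2=-I$ and $\hat J_1\hat J_2=-\hat J_2\hat J_1$.
   Context: $h$ is viewed as the isomorphism $TM\to T^*M$, $X\mapsto h(X,\cdot)$, with inverse $h^{-1}$; $(J^*\eta)(X)=\eta(JX)$; $J$ is $h$-symmetric if $h(JX,Y)=h(X,JY)$. *)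

(* Defs.v *)
From mathcomp Require Import all_boot all_order all_algebra.
Set Implicit Arguments. Unset Strict Implicit. Unset Printing Implicit Defensive.
Import GRing.Theory Num.Theory.
Local Open Scope ring_scope.

(* Fiberwise (local frame) model: at each point of M the tangent space is
   R^n (column vectors 'cV_n), the cotangent space is R^n via dual-basis
   components, a (0,2)-tensor h is an n x n matrix with h(X,Y) = X^T h Y,
   a (1,1)-tensor J is an n x n matrix acting by X |-> J *m X.
   Then h(X) = h *m X (as covector), h^{-1}(eta) = invmx h *m eta and
   J^* eta = J^T *m eta. TM (+) T*M is 'cV_(n+n) via col_mx X eta. *)

Definition hsym (R : comRingType) (n : nat) (h J : 'M[R]_n) : Prop :=
  forall X Y : 'cV[R]_n, (J *m X)^T *m h *m Y = X^T *m h *m (J *m Y).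

Definition Jhat (R : comUnitRingType) (n : nat) (h J : 'M[R]_n) (lam : R)
  : 'M[R]_(n + n) :=
  block_mx J (lam *: invmx h) h (- J^T).

(* Main.v *)
Require Import Defs.
From mathcomp Require Import all_boot all_order all_algebra.
From mathcomp Require Import ring.
Import GRing.Theory Num.Theory.
Local Open Scope ring_scope.

Lemma hsym_mx (R : comRingType) n (h J : 'M[R]_n) : hsym h J -> J^T *m h = h *m J.
Proof.
move=> H; apply/matrixP=> i j.
have E : (delta_mx 0 i : 'rV[R]_n) *m (J^T *m h) *m (delta_mx j 0 : 'cV[R]_n) = delta_mx 0 i *m (h *m J) *m delta_mx j 0.
  by move: (H (delta_mx i 0) (delta_mx j 0)); rewrite trmx_mul trmx_delta !mulmxA.
move: E; rewrite -!rowE -!colE.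
move/(congr1 (fun M : 'M[R]_1 => M 0 0)); rewrite [LHS]mxE [RHS]mxE; by rewrite ![row _ _ _ _]mxE.
Qed.

Lemma hsym_inv (R : comUnitRingType) n (h J : 'M[R]_n) : h \in unitmx ->
  J^T *m h = h *m J -> J *m invmx h = invmx h *m J^T.
Proof.
move=> hu E.
have := congr1 (fun M => invmx h *m M *m invmx h) E => /=.
by rewrite !mulmxA mulVmx // mul1mx -!mulmxA mulmxV // mulmx1.
Qed.

Theorem proposition3p13 (R : realFieldType) (M : Type) (n : nat)
  (h J1 J2 : M -> 'M[R]_n) (lam1 lam2 : R) :
  (forall p, (h p)^T = h p) ->
  (forall p, h p \in unitmx) ->
  (forall p, hsym (h p) (J1 p)) ->
  (forall p, hsym (h p) (J2 p)) ->
  (forall p, J1 p *m J1 p = - (lam1 + 1) *: 1%:M) ->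
  (forall p, J2 p *m J2 p = - (lam2 + 1) *: 1%:M) ->
  (forall p, J1 p *m J2 p + J2 p *m J1 p = - (lam1 + lam2) *: 1%:M) ->
  forall p,
    let H1 := Jhat (h p) (J1 p) lam1 in
    let H2 := Jhat (h p) (J2 p) lam2 in
    [/\ H1 *m H1 = - 1%:M, H2 *m H2 = - 1%:M & H1 *m H2 = - (H2 *m H1)].
Proof.
move=> _ hU s1 s2 E1 E2 E12 p H1 H2.
have hu := hU p.
have S1 := @hsym_mx _ _ _ _ (s1 p); have S2 := @hsym_mx _ _ _ _ (s2 p).
have I1 := @hsym_inv _ _ _ _ hu S1; have I2 := @hsym_inv _ _ _ _ hu S2.
move: (E1 p) (E2 p) (E12 p) => {}E1 {}E2 {}E12.
rewrite /H1 /H2 /Jhat.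
move: (h p) (J1 p) (J2 p) hu S1 S2 I1 I2 E1 E2 E12 => h0 A B hu S1 S2 I1 I2 E1 E2 E12.
have sq (J : 'M[R]_n) lam : J *m J = - (lam + 1) *: 1%:M -> J^T *m J^T = - (lam + 1) *: 1%:M.
  by move=> E; rewrite -trmx_mul E linearZ /= trmx1.
have E21 : A^T *m B^T + B^T *m A^T = - (lam1 + lam2) *: 1%:M.
  by rewrite -!trmx_mul addrC -linearD /= E12 linearZ /= trmx1.
have sc (a b : R) : a + b = - 1 -> a *: (1%:M : 'M[R]_n) + b *: 1%:M = - 1%:M.
  by move=> e; rewrite -scalerDl e scaleN1r.
rewrite !mulmx_block (scalar_mx_block n n) !opp_block_mx.
split; congr block_mx.
- by rewrite -scalemxAl mulVmx // E1 sc //; ring.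
- by rewrite mulmxN -scalemxAr -scalemxAl I1 subrr oppr0.
- by rewrite mulNmx S1 subrr oppr0.
- by rewrite -scalemxAr mulmxV // mulNmx mulmxN opprK (sq _ _ E1) addrC sc //; ring.
- by rewrite -scalemxAl mulVmx // E2 sc //; ring.
- by rewrite mulmxN -scalemxAr -scalemxAl I2 subrr oppr0.
- by rewrite mulNmx S2 subrr oppr0.
- by rewrite -scalemxAr mulmxV // mulNmx mulmxN opprK (sq _ _ E2) addrC sc //; ring.
- apply/eqP; rewrite -subr_eq0 opprK -!scalemxAl mulVmx // addrACA E12 -!scalerDl.
  by rewrite (_ : _ + _ = 0) ?scale0r //; ring.
- by rewrite !mulmxN -!scalemxAr -!scalemxAl I1 I2 opprB.
- by rewrite !mulNmx S1 S2 opprB.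
- apply/eqP; rewrite -subr_eq0 opprK -!scalemxAr mulmxV // !mulNmx !mulmxN !opprK.
  rewrite addrACA [_ *: _ + _ *: _]addrC E21 -!scalerDl.
  by rewrite (_ : _ + _ = 0) ?scale0r //; ring.
Qed.
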